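(* (Label weakening.) In DCC, if $\Delta;\Gamma\vdash M:C$, $\Delta;\overline x{:}\overline A,x{:}A\vdash N:B$, and the label $\ell_i$ does not occur in $\Delta$, then $\Delta,\ell_i(\{\overline x{:}\overline A\},x{:}A\mapsto N:B);\Gamma\vdash M:C$.
   Context: DCC: expressions $A,B,L,M,N::=x\mid U_i\mid\Pi x{:}A.B\mid L@M\mid\ell_i\{\overline M\}$, where $\ell_i$ are label names disjoint from variables and $\overline M=M_1,\dots,M_n$ ($n\ge0$). Type contexts $\Gamma::=\cdot\mid\Gamma,x{:}A$; label contexts $\Delta::=\cdot\mid\Delta,\ell_i(\{\overline x{:}\overline A\},x{:}A\mapsto M:B)$ (free-variable telescope $\overline x{:}\overline A$, argument, body, result type). Substitution standard with $\ell\{\overline M\}[N/x]=\ell\{\overline{M[N/x]}\}$. Reduction: $\Delta\vdash\ell\{\overline M\}@N\triangleright L[\overline M/\overline x,N/x]$ when $\ell(\{\overline x{:}\overline A\},x{:}A\mapsto L:B)\in\Delta$. Equivalence $\Delta\vdash M\equiv N$: common reduct, or the $\eta$-rule ($\Delta\vdash L\triangleright^*\ell\{\overline N\}$, $\Delta\vdash M\triangleright^*M'$, $\ell(\{\overline x{:}\overline A\},x{:}A\mapsto N:B)\in\Delta$, $\Delta\vdash N[\overline N/\overline x]\equiv M'@x$ give $\Delta\vdash L\equiv M$) and its symmetric version. Typing $\Delta;\Gamma\vdash M:A$ and formation $\vdash\Delta;\Gamma$ (mutual): variables from a well-formed context, $U_i:U_{i+1}$, $\Pi x{:}A.B:U_{\max(i,j)}$,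 $M@N:B[N/x]$ when $M:\Pi x{:}A.B$ and $N:A$, conversion along $\equiv$ to a type $B:U_i$, and: if $\vdash\Delta;\Gamma$, $\ell(\{\overline x{:}\overline A\},x{:}A\mapsto M:B)\in\Delta$, $|\overline M|=|\overline x|$ and $\Delta;\Gamma\vdash M_k:A_k[M_1/x_1,\dots,M_{k-1}/x_{k-1}]$ for all $k$, then $\Delta;\Gamma\vdash\ell\{\overline M\}:\Pi x{:}A[\overline M/\overline x].B[\overline M/\overline x]$. Formation: $\vdash\cdot;\cdot$; fresh label entries may be added when $\Delta;\overline x{:}\overline A\vdash\Pi x{:}A.B:U_i$ and $\Delta;\overline x{:}\overline A,x{:}A\vdash M:B$; $\vdash\Delta;\Gamma$ and $\Delta;\Gamma\vdash A:U_i$ give $\vdash\Delta;\Gamma,x{:}A$. *)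

(* Defs.v *)
(* Conventions:
   - [Var n] is the de Bruijn index n (0 = most recently bound variable).
   - Contexts (type contexts Gamma and label telescopes xs:As) are lists whose
     HEAD is the most recently bound variable: "Gamma, x:A" is [A :: Gamma].
     Each type in a context lives in the context formed by the entries
     after it in the list.
   - In a closure [Lab l Ms], the list [Ms] = [M_1; ...; M_n] is in natural
     (left-to-right) order.
   - A label entry  l({xs:As}, x:A |-> M : B)  is [LEntry l tele A M B] where
     [tele] is the telescope as a context (head = A_n), [A] lives in [tele],
     and [M], [B] live in [A :: tele]. *)
From Stdlib Require Import List Arith.
Import ListNotations.

Inductive term : Type :=
| Var  (n : nat)
| Univ (i : nat)
| Pi   (A B : term)            (* Pi x:A. B ; B binds index 0 *)
| App  (M N : term)
| Lab  (l : nat) (Ms : list term).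

Definition upren (xi : nat -> nat) : nat -> nat :=
  fun n => match n with 0 => 0 | S n => S (xi n) end.

Fixpoint ren (xi : nat -> nat) (t : term) : term :=
  match t with
  | Var n => Var (xi n)
  | Univ i => Univ i
  | Pi A B => Pi (ren xi A) (ren (upren xi) B)
  | App M N => App (ren xi M) (ren xi N)
  | Lab l Ms => Lab l (map (ren xi) Ms)
  end.

Definition lift (k : nat) (t : term) : term := ren (fun n => k + n) t.

Definition up (sigma : nat -> term) : nat -> term :=
  fun n => match n with 0 => Var 0 | S n => lift 1 (sigma n) end.

Fixpoint subst (sigma : nat -> term) (t : term) : term :=
  match t with
  | Var n => sigma n
  | Univ i => Univ i
  | Pi A B => Pi (subst sigma A) (subst (up sigma) B)
  | App M N => App (subst sigma M) (subst sigma N)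
  | Lab l Ms => Lab l (map (subst sigma) Ms)
  end.

Definition subst1 (N : term) : nat -> term :=
  fun n => match n with 0 => N | S n => Var n end.

(* instantiation of the variables of a context by a list given
   most-recent-first: index k |-> k-th element, remaining indices shifted *)
Definition inst_rev (Ms : list term) : nat -> term :=
  fun k => nth k Ms (Var (k - length Ms)).

(* [M_1..M_n / x_1..x_n] for a telescope xs, Ms in natural order *)
Definition inst (Ms : list term) : nat -> term := inst_rev (rev Ms).

(* [M_1..M_n / x_1..x_n, N / x] for the context  xs, x *)
Definition inst_arg (Ms : list term) (N : term) : nat -> term :=
  inst_rev (N :: rev Ms).

Inductive lentry : Type :=
| LEntry (l : nat) (tele : list term) (A : term) (M : term) (B : term).

Definition l_name (e : lentry) : nat := let 'LEntry l _ _ _ _ := e in l.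

Definition ldelta := list lentry.

Fixpoint lookup (D : ldelta) (l : nat) : option lentry :=
  match D with
  | [] => None
  | e :: D' => if Nat.eqb (l_name e) l then Some e else lookup D' l
  end.

Definition declared (D : ldelta) (l : nat) : Prop := In l (map l_name D).

Inductive step (D : ldelta) : term -> term -> Prop :=
| step_beta : forall l tele A L B Ms N,
    lookup D l = Some (LEntry l tele A L B) ->
    length Ms = length tele ->
    step D (App (Lab l Ms) N) (subst (inst_arg Ms N) L)
| step_piL : forall A A' B, step D A A' -> step D (Pi A B) (Pi A' B)
| step_piR : forall A B B', step D B B' -> step D (Pi A B) (Pi A B')
| step_appL : forall M M' N, step D M M' -> step D (App M N) (App M' N)
| step_appR : forall M N N', step D N N' -> step D (App M N) (App M N')
| step_lab : forall l Ms Ms', step_list D Ms Ms' -> step D (Lab l Ms) (Lab l Ms')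
with step_list (D : ldelta) : list term -> list term -> Prop :=
| step_list_hd : forall M M' Ms, step D M M' -> step_list D (M :: Ms) (M' :: Ms)
| step_list_tl : forall M Ms Ms', step_list D Ms Ms' -> step_list D (M :: Ms) (M :: Ms').

Inductive red (D : ldelta) : term -> term -> Prop :=
| red_refl : forall M, red D M M
| red_step : forall M N L, step D M N -> red D N L -> red D M L.

Inductive equiv (D : ldelta) : term -> term -> Prop :=
| equiv_red : forall M N L, red D M L -> red D N L -> equiv D M N
| equiv_eta : forall L M M' l Ns tele A Nb B,
    red D L (Lab l Ns) ->
    red D M M' ->
    lookup D l = Some (LEntry l tele A Nb B) ->
    length Ns = length tele ->
    (* N[Ns/xs] == M' @ x, with x the (fresh) variable bound at index 0 *)
    equiv D (subst (up (inst Ns)) Nb) (App (lift 1 M') (Var 0)) ->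
    equiv D L M
| equiv_eta_sym : forall L M M' l Ns tele A Nb B,
    red D L (Lab l Ns) ->
    red D M M' ->
    lookup D l = Some (LEntry l tele A Nb B) ->
    length Ns = length tele ->
    equiv D (App (lift 1 M') (Var 0)) (subst (up (inst Ns)) Nb) ->
    equiv D M L.

(* typing  D;G |- M : A ,  formation  |- D;G , and the argument judgement
   for closures (args are given most-recent-first, matching the telescope). *)
Inductive typing : ldelta -> list term -> term -> term -> Prop :=
| ty_var : forall D G n A,
    wf D G -> nth_error G n = Some A ->
    typing D G (Var n) (lift (S n) A)
| ty_univ : forall D G i,
    wf D G -> typing D G (Univ i) (Univ (S i))
| ty_pi : forall D G A B i j,
    typing D G A (Univ i) -> typing D (A :: G) B (Univ j) ->
    typing D G (Pi A B) (Univ (Nat.max i j))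
| ty_app : forall D G M N A B,
    typing D G M (Pi A B) -> typing D G N A ->
    typing D G (App M N) (subst (subst1 N) B)
| ty_conv : forall D G M A B i,
    typing D G M A -> typing D G B (Univ i) -> equiv D A B ->
    typing D G M B
| ty_lab : forall D G l tele A Mb B Ms,
    wf D G ->
    lookup D l = Some (LEntry l tele A Mb B) ->
    args_typed D G (rev Ms) tele ->
    typing D G (Lab l Ms) (Pi (subst (inst Ms) A) (subst (up (inst Ms)) B))
with wf : ldelta -> list term -> Prop :=
| wf_empty : wf [] []
| wf_label : forall D l tele A M B i,
    ~ declared D l ->
    typing D tele (Pi A B) (Univ i) ->
    typing D (A :: tele) M B ->
    wf (LEntry l tele A M B :: D) []
| wf_var : forall D G A i,
    wf D G -> typing D G A (Univ i) -> wf D (A :: G)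
with args_typed : ldelta -> list term -> list term -> list term -> Prop :=
| args_nil : forall D G, args_typed D G [] []
| args_cons : forall D G M Ms A tele,
    args_typed D G Ms tele ->
    typing D G M (subst (inst_rev Ms) A) ->
    args_typed D G (M :: Ms) (A :: tele).

(* Main.v *)
Require Import Defs.
From Stdlib Require Import List Arith Lia.
Import ListNotations.

Fixpoint term_ind' (P : term -> Prop)
  (HV : forall n, P (Var n)) (HU : forall i, P (Univ i))
  (HP : forall A B, P A -> P B -> P (Pi A B))
  (HA : forall M N, P M -> P N -> P (App M N))
  (HL : forall l Ms, Forall P Ms -> P (Lab l Ms)) (t : term) : P t :=
  match t with
  | Var n => HV n
  | Univ i => HU i
  | Pi A B => HP A B (term_ind' P HV HU HP HA HL A) (term_ind' P HV HU HP HA HL B)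
  | App M N => HA M N (term_ind' P HV HU HP HA HL M) (term_ind' P HV HU HP HA HL N)
  | Lab l Ms => HL l Ms ((fix go (Ms : list term) : Forall P Ms :=
       match Ms with
       | [] => Forall_nil _
       | M :: Ms' => Forall_cons _ (term_ind' P HV HU HP HA HL M) (go Ms')
       end) Ms)
  end.

Fixpoint closed (n : nat) (t : term) : Prop :=
  match t with
  | Var k => k < n
  | Univ _ => True
  | Pi A B => closed n A /\ closed (S n) B
  | App M N => closed n M /\ closed n N
  | Lab _ Ms => (fix go (Ms : list term) : Prop :=
       match Ms with [] => True | M :: Ms' => closed n M /\ go Ms' end) Ms
  end.

Lemma closed_Lab n l Ms : closed n (Lab l Ms) <-> Forall (closed n) Ms.
Proof.
  simpl. induction Ms; split; intros H; auto.
  - destruct H; constructor; auto; apply IHMs; auto.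
  - inversion H; subst; split; auto; apply IHMs; auto.
Qed.

Lemma ren_ext t : forall xi zeta, (forall n, xi n = zeta n) -> ren xi t = ren zeta t.
Proof.
  induction t using term_ind'; intros xi zeta E; simpl; f_equal; auto.
  - apply IHt2. intros [|n]; simpl; auto.
  - apply map_ext_Forall. eapply Forall_impl; [|exact H]. intros a Ha; simpl; auto.
Qed.

Lemma ren_ren t : forall xi zeta, ren xi (ren zeta t) = ren (fun n => xi (zeta n)) t.
Proof.
  induction t using term_ind'; intros xi zeta; simpl; f_equal; auto.
  - rewrite IHt2. apply ren_ext. intros [|n]; simpl; auto.
  - rewrite map_map. apply map_ext_Forall. eapply Forall_impl; [|exact H]. intros a Ha; simpl; auto.
Qed.

Lemma subst_ext t : forall s r, (forall n, s n = r n) -> subst s t = subst r t.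
Proof.
  induction t using term_ind'; intros s r E; simpl; f_equal; auto.
  - apply IHt2. intros [|n]; unfold up; simpl; f_equal; auto.
  - apply map_ext_Forall. eapply Forall_impl; [|exact H]. intros a Ha; simpl; auto.
Qed.

Lemma subst_ren t : forall s xi, subst s (ren xi t) = subst (fun n => s (xi n)) t.
Proof.
  induction t using term_ind'; intros s xi; simpl; f_equal; auto.
  - rewrite IHt2. apply subst_ext. intros [|n]; simpl; auto.
  - rewrite map_map. apply map_ext_Forall. eapply Forall_impl; [|exact H]. intros a Ha; simpl; auto.
Qed.

Lemma ren_subst t : forall s xi, ren xi (subst s t) = subst (fun n => ren xi (s n)) t.
Proof.
  induction t using term_ind'; intros s xi; simpl; f_equal; auto.
  - rewrite IHt2. apply subst_ext. intros [|n]; simpl; auto.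
    unfold lift. rewrite !ren_ren. apply ren_ext. intros; reflexivity.
  - rewrite map_map. apply map_ext_Forall. eapply Forall_impl; [|exact H]. intros a Ha; simpl; auto.
Qed.

Lemma subst_subst t : forall s r, subst r (subst s t) = subst (fun n => subst r (s n)) t.
Proof.
  induction t using term_ind'; intros s r; simpl; f_equal; auto.
  - rewrite IHt2. apply subst_ext. intros [|n]; simpl; auto.
    unfold lift. rewrite subst_ren, ren_subst. apply subst_ext. intros; reflexivity.
  - rewrite map_map. apply map_ext_Forall. eapply Forall_impl; [|exact H]. intros a Ha; simpl; auto.
Qed.

Lemma ren_as_subst t : forall xi, ren xi t = subst (fun n => Var (xi n)) t.
Proof.
  induction t using term_ind'; intros xi; simpl; f_equal; auto.
  - rewrite IHt2. apply subst_ext. intros [|n]; simpl; auto.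
  - apply map_ext_Forall. eapply Forall_impl; [|exact H]. intros a Ha; simpl; auto.
Qed.

Lemma subst_id t : subst Var t = t.
Proof.
  induction t using term_ind'; simpl; f_equal; auto.
  - rewrite <- IHt2 at 2. apply subst_ext. intros [|n]; simpl; auto.
  - rewrite <- (map_id Ms) at 2. apply map_ext_Forall. auto.
Qed.

Lemma subst_closed_ext t : forall n s r, closed n t -> (forall k, k < n -> s k = r k) ->
  subst s t = subst r t.
Proof.
  induction t using term_ind'; intros m s r Hc E; simpl in *; f_equal; auto; try tauto.
  - destruct Hc; eauto.
  - destruct Hc as [_ Hc]. apply (IHt2 (S m)); auto.
    intros [|k] Hk; simpl; auto. f_equal. apply E. lia.
  - destruct Hc; eauto.
  - destruct Hc; eauto.
  - apply (proj1 (closed_Lab m l Ms)) in Hc.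
    apply map_ext_Forall. induction H; constructor; inversion Hc; subst; eauto.
Qed.

Lemma lift_subst_up s t : subst (up s) (lift 1 t) = lift 1 (subst s t).
Proof. unfold lift. rewrite subst_ren, ren_subst. apply subst_ext; reflexivity. Qed.

Lemma inst_rev_pt s Ms k : k < length Ms ->
  subst s (inst_rev Ms k) = inst_rev (map (subst s) Ms) k.
Proof.
  intros Hk. unfold inst_rev. rewrite length_map.
  rewrite (nth_indep (map (subst s) Ms) (Var (k - length Ms)) (subst s (Var (k - length Ms))))
    by (rewrite length_map; auto).
  rewrite map_nth. reflexivity.
Qed.

Lemma L_inst s Ms A : closed (length Ms) A ->
  subst s (subst (inst_rev Ms) A) = subst (inst_rev (map (subst s) Ms)) A.
Proof.
  intros Hc. rewrite subst_subst. eapply subst_closed_ext; [exact Hc|].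
  intros k Hk. apply inst_rev_pt; auto.
Qed.

Lemma L_inst_up s Ms B : closed (S (length Ms)) B ->
  subst (up s) (subst (up (inst_rev Ms)) B) = subst (up (inst_rev (map (subst s) Ms))) B.
Proof.
  intros Hc. rewrite subst_subst. eapply subst_closed_ext; [exact Hc|].
  intros [|k] Hk; simpl; auto.
  rewrite lift_subst_up. f_equal. apply inst_rev_pt. lia.
Qed.

Lemma inst_map s Ms : inst (map (subst s) Ms) = inst_rev (map (subst s) (rev Ms)).
Proof. unfold inst. rewrite map_rev. reflexivity. Qed.

Definition Dsub (D D' : ldelta) := forall l e, lookup D l = Some e -> lookup D' l = Some e.

Scheme step_mut := Induction for step Sort Prop
  with step_list_mut := Induction for step_list Sort Prop.

Lemma step_mono D D' (H : Dsub D D') :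
  (forall a b, step D a b -> step D' a b) /\ (forall a b, step_list D a b -> step_list D' a b).
Proof.
  split; [intros a b Hs; induction Hs using step_mut with (P0 := fun a b _ => step_list D' a b)
         |intros a b Hs; induction Hs using step_list_mut with (P := fun a b _ => step D' a b)];
  try (econstructor; eauto; fail).
  all: eapply step_beta; eauto.
Qed.

Lemma red_mono D D' : Dsub D D' -> forall a b, red D a b -> red D' a b.
Proof.
  intros H a b Hr; induction Hr; [constructor|econstructor; eauto; apply (step_mono D D' H); auto].
Qed.

Lemma equiv_mono D D' : Dsub D D' -> forall a b, equiv D a b -> equiv D' a b.
Proof.
  intros H a b He; induction He.
  - econstructor; eapply red_mono; eauto.
  - eapply equiv_eta; eauto using red_mono.
  - eapply equiv_eta_sym; eauto using red_mono.
Qed.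

Definition DScoped (D : ldelta) := forall l l' tele A M B,
  lookup D l = Some (LEntry l' tele A M B) -> closed (S (length tele)) M.

Lemma step_subst D (HD : DScoped D) :
  (forall a b, step D a b -> forall sg, step D (subst sg a) (subst sg b)) /\
  (forall a b, step_list D a b -> forall sg, step_list D (map (subst sg) a) (map (subst sg) b)).
Proof.
  split; [intros a b Hs; induction Hs using step_mut with
     (P0 := fun a b _ => forall sg, step_list D (map (subst sg) a) (map (subst sg) b))
   |intros a b Hs; induction Hs using step_list_mut with
     (P := fun a b _ => forall sg, step D (subst sg a) (subst sg b))]; intros sg;
  simpl; try (econstructor; eauto; fail).
  all: unfold inst_arg; rewrite L_inst by (simpl; rewrite length_rev, e0; eapply HD; eauto); simpl.
  all: rewrite map_rev; eapply step_beta; eauto; rewrite length_map; auto.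
Qed.

Lemma red_subst D (HD : DScoped D) a b : red D a b -> forall s, red D (subst s a) (subst s b).
Proof.
  intros Hr; induction Hr; intros s; [constructor|econstructor; eauto; apply (step_subst D HD); auto].
Qed.

Lemma equiv_subst D (HD : DScoped D) a b : equiv D a b -> forall s, equiv D (subst s a) (subst s b).
Proof.
  intros He; induction He; intros s.
  - econstructor; eapply red_subst; eauto.
  - eapply equiv_eta with (M' := subst s M') (Ns := map (subst s) Ns).
    + apply (red_subst D HD _ _ H s).
    + eapply red_subst; eauto.
    + eauto.
    + rewrite length_map; auto.
    + specialize (IHHe (up s)). unfold inst in *. rewrite L_inst_up in IHHe
        by (rewrite length_rev, H2; eapply HD; eauto).
      simpl in IHHe. rewrite lift_subst_up in IHHe. rewrite <- map_rev. exact IHHe.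
  - eapply equiv_eta_sym with (M' := subst s M') (Ns := map (subst s) Ns).
    + apply (red_subst D HD _ _ H s).
    + eapply red_subst; eauto.
    + eauto.
    + rewrite length_map; auto.
    + specialize (IHHe (up s)). unfold inst in *. rewrite L_inst_up in IHHe
        by (rewrite length_rev, H2; eapply HD; eauto).
      simpl in IHHe. rewrite lift_subst_up in IHHe. rewrite <- map_rev. exact IHHe.
Qed.

Scheme typing_mut := Induction for typing Sort Prop
  with wf_mut := Induction for wf Sort Prop
  with args_mut := Induction for args_typed Sort Prop.
Combined Scheme typing_comb from typing_mut, wf_mut, args_mut.

Lemma typing_wf D G M A : typing D G M A -> wf D G.
Proof. intros H; induction H; auto. Qed.

Lemma args_len D G Ms tele : args_typed D G Ms tele -> length Ms = length tele.
Proof. intros H; induction H; simpl; auto. Qed.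

Fixpoint ctx_closed (G : list term) : Prop :=
  match G with [] => True | A :: G' => closed (length G') A /\ ctx_closed G' end.

Lemma scoping :
  (forall D G M A, typing D G M A -> closed (length G) M) /\
  (forall D G, wf D G -> True) /\
  (forall D G Ms tele, args_typed D G Ms tele -> Forall (closed (length G)) Ms).
Proof.
  apply typing_comb; intros; simpl; auto.
  - apply nth_error_Some. congruence.
  - apply (proj2 (closed_Lab _ l Ms)). rewrite <- (rev_involutive Ms). apply Forall_rev. exact H0.
Qed.

Lemma wf_ctx_closed D G : wf D G -> ctx_closed G.
Proof.
  intros H; induction H; simpl; auto. split; auto. eapply scoping; eauto.
Qed.

Lemma wf_nth D G : wf D G -> forall n A, nth_error G n = Some A ->
  exists i, typing D (skipn (S n) G) A (Univ i).
Proof.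
  intros H; induction H; intros n X Hn; try (destruct n; simpl in Hn; discriminate).
  destruct n; simpl in *.
  - inversion Hn; subst; eauto.
  - eauto.
Qed.

Lemma wf_nil D G : wf D G -> wf D [].
Proof. intros H; induction H; [constructor | econstructor; eauto | auto]. Qed.

Lemma lookup_name D l e : lookup D l = Some e -> l_name e = l /\ declared D l.
Proof.
  induction D as [|e0 D IH]; simpl; [discriminate|].
  destruct (Nat.eqb (l_name e0) l) eqn:E.
  - intros H; inversion H; subst. apply Nat.eqb_eq in E; split; auto. left; auto.
  - intros H; destruct (IH H); split; auto. right; auto.
Qed.

Lemma Dsub_cons D e : ~ declared D (l_name e) -> Dsub D (e :: D).
Proof.
  intros Hn l x Hl. simpl. destruct (Nat.eqb (l_name e) l) eqn:E; auto.
  apply Nat.eqb_eq in E; subst. exfalso; apply Hn. apply (lookup_name _ _ _ Hl).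
Qed.

Lemma wf_fresh e D : wf (e :: D) [] -> ~ declared D (l_name e).
Proof. intros H; inversion H; subst; simpl; auto. Qed.

Lemma LW e :
  (forall D G M A, typing D G M A -> wf (e :: D) [] -> typing (e :: D) G M A) /\
  (forall D G, wf D G -> wf (e :: D) [] -> wf (e :: D) G) /\
  (forall D G Ms tele, args_typed D G Ms tele -> wf (e :: D) [] -> args_typed (e :: D) G Ms tele).
Proof.
  apply typing_comb; intros; try assumption; try (econstructor; eauto; fail).
  - eapply ty_conv; eauto. apply equiv_mono with D; auto.
    match goal with Hw : wf (e :: D) [] |- _ => apply Dsub_cons, wf_fresh, Hw end.
  - eapply ty_lab; eauto.
    match goal with Hw : wf (e :: D) [] |- _ => eapply Dsub_cons; [apply wf_fresh, Hw|eauto] end.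
Qed.

Lemma wf_full D : wf D [] -> forall l l' tele A M B,
  lookup D l = Some (LEntry l' tele A M B) ->
  (exists i, typing D tele (Pi A B) (Univ i)) /\ typing D (A :: tele) M B.
Proof.
  induction D as [|e0 D0 IH]; intros Hw l l' tele A M B Hl; [discriminate|].
  pose proof Hw as Hw'. inversion Hw'; subst.
  match goal with H1 : typing D0 _ (Pi _ _) _ |- _ => rename H1 into HP end.
  simpl in Hl. destruct (Nat.eqb l0 l) eqn:E.
  - inversion Hl; subst. split.
    + exists i. apply (proj1 (LW _)); auto.
    + apply (proj1 (LW _)); auto.
  - assert (Hw0 : wf D0 []) by (eapply wf_nil, typing_wf; eauto).
    destruct (IH Hw0 _ _ _ _ _ _ Hl) as [[j Hj] HM]. split.
    + exists j. apply (proj1 (LW _)); auto.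
    + apply (proj1 (LW _)); auto.
Qed.

Lemma wf_full' D G : wf D G -> forall l l' tele A M B,
  lookup D l = Some (LEntry l' tele A M B) ->
  (exists i, typing D tele (Pi A B) (Univ i)) /\ typing D (A :: tele) M B.
Proof. intros H; apply wf_full; eapply wf_nil; eauto. Qed.

Lemma wf_DScoped D G : wf D G -> DScoped D.
Proof.
  intros H l l' tele A M B Hl. destruct (wf_full' D G H _ _ _ _ _ _ Hl) as [_ HM].
  apply (proj1 scoping) in HM. exact HM.
Qed.

Lemma entry_closed D G : wf D G -> forall l l' tele A M B,
  lookup D l = Some (LEntry l' tele A M B) ->
  closed (length tele) A /\ closed (S (length tele)) B /\ ctx_closed tele.
Proof.
  intros H l l' tele A M B Hl. destruct (wf_full' D G H _ _ _ _ _ _ Hl) as [[i Hi] _].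
  pose proof (proj1 scoping _ _ _ _ Hi) as Hc. simpl in Hc.
  repeat split; try tauto. eapply wf_ctx_closed, typing_wf; eauto.
Qed.

Lemma lift_lift k t : lift 1 (lift k t) = lift (S k) t.
Proof. unfold lift. rewrite ren_ren. apply ren_ext; reflexivity. Qed.

Lemma subst1_comm s N B :
  subst s (subst (subst1 N) B) = subst (subst1 (subst s N)) (subst (up s) B).
Proof.
  rewrite !subst_subst. apply subst_ext. intros [|k]; simpl; auto.
  unfold lift. rewrite subst_ren. simpl. rewrite <- (subst_id (s k)) at 1.
  apply subst_ext; reflexivity.
Qed.

Definition Rctx (s : nat -> term) (G G' : list term) := forall n A, nth_error G n = Some A ->
  exists k A', s n = Var k /\ nth_error G' k = Some A' /\ subst s (lift (S n) A) = lift (S k) A'.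

Lemma Rctx_up s G G' X : Rctx s G G' -> Rctx (up s) (X :: G) (subst s X :: G').
Proof.
  intros H [|m] A Hn; simpl in Hn.
  - inversion Hn; subst. exists 0, (subst s A). repeat split. apply lift_subst_up.
  - destruct (H m A Hn) as (k & A' & E1 & E2 & E3).
    exists (S k), A'. simpl. rewrite E1. repeat split; auto.
    rewrite <- lift_lift, lift_subst_up, E3. apply lift_lift.
Qed.

Lemma lab_type_subst s Ms A B (tele : list term) :
  length Ms = length tele -> closed (length tele) A -> closed (S (length tele)) B ->
  subst s (Pi (subst (inst Ms) A) (subst (up (inst Ms)) B)) =
  Pi (subst (inst (map (subst s) Ms)) A) (subst (up (inst (map (subst s) Ms))) B).
Proof.
  intros HL HA HB. simpl. unfold inst. rewrite L_inst, L_inst_up, map_rev; auto;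
  rewrite length_rev, HL; auto.
Qed.

Lemma renaming :
  (forall D G M T, typing D G M T -> forall s G', Rctx s G G' -> wf D G' ->
     typing D G' (subst s M) (subst s T)) /\
  (forall D G, wf D G -> True) /\
  (forall D G Ms tele, args_typed D G Ms tele -> forall s G', Rctx s G G' -> wf D G' ->
     ctx_closed tele -> args_typed D G' (map (subst s) Ms) tele).
Proof.
  apply typing_comb; intros; auto.
  - destruct (H0 n A e) as (k & A' & E1 & E2 & E3). simpl. rewrite E1, E3. constructor; auto.
  - simpl. constructor; auto.
  - simpl. specialize (H s G' H1 H2). simpl in H.
    econstructor; [exact H|]. apply (H0 (up s)). apply Rctx_up; auto. econstructor; eauto.
  - rewrite subst1_comm. specialize (H s G' H1 H2). simpl in H. eapply ty_app; eauto.
  - eapply ty_conv; eauto. apply equiv_subst; auto. eapply wf_DScoped; eauto.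
  - destruct (entry_closed _ _ H2 _ _ _ _ _ _ e) as (HA & HB & Ht).
    pose proof (args_len _ _ _ _ a) as HL. rewrite length_rev in HL.
    rewrite (lab_type_subst s Ms A B tele); auto.
    simpl. eapply ty_lab; eauto. rewrite <- map_rev. auto.
  - simpl. constructor.
  - simpl in H3. destruct H3 as [HA Ht]. simpl. constructor; auto.
    pose proof (args_len _ _ _ _ a) as HL.
    rewrite <- L_inst by (rewrite HL; auto). auto.
Qed.

Lemma shift_rctx k G : Rctx (fun n => Var (k + n)) (skipn k G) G.
Proof.
  intros n A Hn. rewrite nth_error_skipn in Hn. exists (k + n), A. repeat split; auto.
  rewrite <- ren_as_subst. unfold lift. rewrite ren_ren. apply ren_ext. intros; simpl; lia.
Qed.

Lemma weaken1 D G X M T : typing D G M T -> wf D (X :: G) ->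
  typing D (X :: G) (lift 1 M) (lift 1 T).
Proof.
  intros H Hw. unfold lift. rewrite !ren_as_subst.
  apply (proj1 renaming _ _ _ _ H _ _ (shift_rctx 1 (X :: G)) Hw).
Qed.

Definition Sctx D (s : nat -> term) (G G' : list term) := forall n A, nth_error G n = Some A ->
  typing D G' (s n) (subst s (lift (S n) A)).

Lemma Sctx_up D s G G' X : Sctx D s G G' -> wf D (subst s X :: G') ->
  Sctx D (up s) (X :: G) (subst s X :: G').
Proof.
  intros H Hw [|m] A Hn; simpl in Hn.
  - inversion Hn; subst. simpl. rewrite lift_subst_up. constructor; auto.
  - simpl. rewrite <- (lift_lift (S m) A), lift_subst_up. apply weaken1; auto.
Qed.

Lemma substitution :
  (forall D G M T, typing D G M T -> forall s G', Sctx D s G G' -> wf D G' ->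
     typing D G' (subst s M) (subst s T)) /\
  (forall D G, wf D G -> True) /\
  (forall D G Ms tele, args_typed D G Ms tele -> forall s G', Sctx D s G G' -> wf D G' ->
     ctx_closed tele -> args_typed D G' (map (subst s) Ms) tele).
Proof.
  apply typing_comb; intros; auto.
  - simpl. apply H0; auto.
  - simpl. constructor; auto.
  - simpl. specialize (H s G' H1 H2). simpl in H.
    econstructor; [exact H|]. apply (H0 (up s)). apply Sctx_up; auto. econstructor; eauto.
    econstructor; eauto.
  - rewrite subst1_comm. specialize (H s G' H1 H2). simpl in H. eapply ty_app; eauto.
  - eapply ty_conv; eauto. apply equiv_subst; auto. eapply wf_DScoped; eauto.
  - destruct (entry_closed _ _ H2 _ _ _ _ _ _ e) as (HA & HB & Ht).
    pose proof (args_len _ _ _ _ a) as HL. rewrite length_rev in HL.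
    rewrite (lab_type_subst s Ms A B tele); auto.
    simpl. eapply ty_lab; eauto. rewrite <- map_rev. auto.
  - simpl. constructor.
  - simpl in H3. destruct H3 as [HA Ht]. simpl. constructor; auto.
    pose proof (args_len _ _ _ _ a) as HL.
    rewrite <- L_inst by (rewrite HL; auto). auto.
Qed.

Lemma pi_inv D G A B T : typing D G (Pi A B) T ->
  exists i j, typing D G A (Univ i) /\ typing D (A :: G) B (Univ j).
Proof.
  intros H; remember (Pi A B) as P; induction H; try discriminate; subst; eauto.
  inversion HeqP; subst; eauto.
Qed.

Lemma inst_rev_cons M Ms k : inst_rev (M :: Ms) (S k) = inst_rev Ms k.
Proof. reflexivity. Qed.

Lemma args_Sctx D G Ms tele : args_typed D G Ms tele -> Sctx D (inst_rev Ms) tele G.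
Proof.
  intros H; induction H; intros n X Hn.
  - destruct n; discriminate.
  - destruct n as [|m]; simpl in Hn.
    + inversion Hn; subst. unfold lift. rewrite subst_ren.
      replace (subst (fun n => inst_rev (M :: Ms) (1 + n)) X) with (subst (inst_rev Ms) X)
        by (apply subst_ext; reflexivity).
      exact H0.
    + rewrite inst_rev_cons. rewrite <- (lift_lift (S m) X). unfold lift at 1. rewrite subst_ren.
      replace (subst (fun n => inst_rev (M :: Ms) (1 + n)) (lift (S m) X))
        with (subst (inst_rev Ms) (lift (S m) X)) by (apply subst_ext; reflexivity).
      apply IHargs_typed; auto.
Qed.

Lemma subst1_lift N k X : subst (subst1 N) (lift (S k) X) = lift k X.
Proof.
  unfold lift. rewrite subst_ren, ren_as_subst. apply subst_ext; reflexivity.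
Qed.

Lemma validity D G M T : typing D G M T -> exists i, typing D G T (Univ i).
Proof.
  intros H; induction H.
  - destruct (wf_nth _ _ H _ _ H0) as [i Hi]. exists i.
    pose proof (proj1 renaming _ _ _ _ Hi _ _ (shift_rctx (S n) G) H) as HH.
    unfold lift. rewrite ren_as_subst. exact HH.
  - exists (S (S i)). constructor; auto.
  - exists (S (Nat.max i j)). constructor. eapply typing_wf; eauto.
  - destruct IHtyping1 as [k Hk]. destruct (pi_inv _ _ _ _ _ Hk) as (i & j & HA & HB).
    exists j. assert (Hw : wf D G) by (eapply typing_wf; eauto).
    refine (proj1 substitution _ _ _ _ HB (subst1 N) G _ Hw).
    intros [|m] X Hm; simpl in Hm.
    + inversion Hm; subst. rewrite subst1_lift. unfold lift; rewrite ren_as_subst, subst_id.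
      exact H0.
    + rewrite subst1_lift. simpl. constructor; auto.
  - exists i; auto.
  - destruct (wf_full' _ _ H _ _ _ _ _ _ H0) as [[i Hi] _]. exists i.
    refine (proj1 substitution _ _ _ _ Hi (inst Ms) G _ H).
    apply args_Sctx; auto.
Qed.

Theorem lemma3p2 (D : ldelta) (G : list term) (M C : term)
    (l : nat) (tele : list term) (A N B : term) :
  typing D G M C ->
  typing D (A :: tele) N B ->
  ~ declared D l ->
  typing (LEntry l tele A N B :: D) G M C.
Proof.
  intros HM HN Hf. destruct (validity _ _ _ _ HN) as [j Hj].
  pose proof (typing_wf _ _ _ _ HN) as Hw. inversion Hw; subst.
  assert (Hw' : wf (LEntry l tele A N B :: D) []).
  { eapply wf_label; eauto. econstructor; eauto. }
  apply (proj1 (LW _)); auto.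
Qed.
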